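(* For every integer $k\ge1$ and every $x\in\mathbb{C}$, $$\sum_{n=0}^{k}p(n)x^n=\det\big[d_{i-j}-x\,d_{i-j+1}\big]_{0\le i,j\le k-1}.$$
   Context: $p(n)$ is the number of partitions of $n$ ($p(0)=1$). With $q_m=m(3m-1)/2$ ($m\in\mathbb{Z}$) the generalized pentagonal numbers, $d_q=(-1)^m$ if $q=q_m$ for some $m$, $d_q=0$ for other integers $q\ge0$, and $d_q=0$ for $q<0$; thus $\sum_{q\ge0}d_qz^q=\prod_{k\ge1}(1-z^k)$. *)

(* Defs.v *)
From mathcomp Require Import all_boot all_order all_algebra.
From mathcomp Require Import complex Rstruct.
From Stdlib Require Rdefinitions.
Set Implicit Arguments. Unset Strict Implicit. Unset Printing Implicit Defensive.
Import Order.TTheory GRing.Theory Num.Theory.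

Definition Cplx : fieldType := complex Rdefinitions.R.

(* p(n): number of partitions of n, i.e. of nonincreasing sequences
   lambda_0 >= lambda_1 >= ... >= lambda_{n-1} >= 0 of naturals with sum n
   (a partition of n has at most n parts; pad with zeros). p 0 = 1. *)
Definition npart (n : nat) : nat :=
  #|[set l : {ffun 'I_n -> 'I_n.+1} |
      [forall i : 'I_n, forall j : 'I_n, (i <= j) ==> (l j <= l i)]
      && ((\sum_(i < n) (l i : nat)) == n)]|.

Local Open Scope ring_scope.

Definition pent (m : int) : int := ((m * (3 * m - 1)) %/ 2)%Z.

(* d_q = (-1)^m if q = q_m for some m in Z, 0 otherwise (and 0 for q < 0).
   Any m with q_m = q >= 0 satisfies |m| <= q, so searching m in [-q, q]
   is exhaustive. *)
Definition dpent (q : int) : int :=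
  if q < 0 then 0 else
  match [pick i : 'I_(2 * `|q|).+1 | pent (i%:Z - `|q|%:Z) == q] with
  | Some i => (-1) ^+ `|i%:Z - `|q|%:Z|%N
  | None => 0
  end.

(* Main.v *)
Require Import Defs.
From mathcomp Require Import all_boot all_order all_algebra.
From mathcomp Require Import complex Rstruct.
From mathcomp Require Import zify ring.
Set Implicit Arguments. Unset Strict Implicit. Unset Printing Implicit Defensive.


Lemma sum_delta_nat (N : nat) (F : nat -> nat) a : (a <= N)%N ->
  \sum_(v < N.+1) F v * (a == v) = F a.
Proof.
move=> ha; rewrite (bigD1 (Ordinal (ha : (a < N.+1)%N))) //= eqxx muln1 big1 ?addn0 //.
move=> v hv; rewrite -val_eqE /= eq_sym in hv; by rewrite (negbTE hv) muln0.
Qed.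

Lemma Gsum (N : nat) (F : nat -> nat) (s : seq nat) : all (fun v => v <= N)%N s ->
  \sum_(x <- s) F x = \sum_(v < N.+1) F v * count_mem (v : nat) s.
Proof.
elim: s => [_|a s IH] /=.
  by rewrite big_nil big1 // => v _; rewrite muln0.
move/andP => [ha hs]; rewrite big_cons IH //.
under [RHS]eq_bigr do rewrite mulnDr.
by rewrite big_split /= sum_delta_nat.
Qed.

Definition PS n := [set l : {ffun 'I_n -> 'I_n.+1} |
      [forall i : 'I_n, forall j : 'I_n, (i <= j) ==> (l j <= l i)]
      && ((\sum_(i < n) (l i : nat)) == n)].

Lemma npartE n : npart n = #|PS n|. Proof. by []. Qed.

Definition MU N n := [set m : {ffun 'I_N -> 'I_N.+1} | (\sum_(j < N) j.+1 * m j) == n].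

Section Bij.
Variables (N n : nat).
Hypothesis nN : (n <= N)%N.

Definition sq (l : {ffun 'I_n -> 'I_n.+1}) := [seq (l i : nat) | i <- enum 'I_n].

Lemma sq_size (l : {ffun 'I_n -> 'I_n.+1}) : size (sq l) = n.
Proof. by rewrite size_map size_enum_ord. Qed.

Lemma sq_nth (l : {ffun 'I_n -> 'I_n.+1}) (i : 'I_n) : nth 0 (sq l) i = l i.
Proof. by rewrite (nth_map i) ?size_enum_ord // nth_ord_enum. Qed.

Lemma sq_bound (l : {ffun 'I_n -> 'I_n.+1}) : all (fun v => v <= N)%N (sq l).
Proof. apply/allP => v /mapP [i _ ->]; move: (ltn_ord (l i)); lia. Qed.

Lemma sq_sum (l : {ffun 'I_n -> 'I_n.+1}) : \sum_(i < n) (l i : nat) = \sum_(x <- sq l) x.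
Proof. by rewrite big_map big_enum. Qed.

Definition fB (l : {ffun 'I_n -> 'I_n.+1}) : {ffun 'I_N -> 'I_N.+1} :=
  [ffun j : 'I_N => inord (count_mem j.+1 (sq l))].

Lemma f_val (l : {ffun 'I_n -> 'I_n.+1}) (j : 'I_N) : (fB l j : nat) = count_mem j.+1 (sq l).
Proof.
rewrite ffunE inordK //; apply: leq_ltn_trans (count_size _ _) _; rewrite sq_size; lia.
Qed.

Lemma f_in (l : {ffun 'I_n -> 'I_n.+1}) : l \in PS n -> fB l \in MU N n.
Proof.
rewrite !inE => /andP [_ /eqP hs]; apply/eqP.
under eq_bigr do rewrite f_val.
rewrite -[RHS]hs sq_sum (Gsum id (sq_bound l)) big_ord_recl /= mul0n add0n.
by [].
Qed.


Lemma sq_sorted (l : {ffun 'I_n -> 'I_n.+1}) : l \in PS n -> sorted geq (sq l).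
Proof.
rewrite inE => /andP [/forallP h _]; apply/(sortedP 0) => i; rewrite sq_size => hi.
have hi1 : (i < n)%N by lia.
rewrite (sq_nth l (Ordinal hi1)) (sq_nth l (Ordinal hi)).
by have := h (Ordinal hi1) => /forallP /(_ (Ordinal hi)) /implyP /= ->.
Qed.

Lemma f_inj : {in PS n &, injective fB}.
Proof.
move=> l1 l2 h1 h2 e.
have cnt : forall v, count_mem v (sq l1) = count_mem v (sq l2).
  move=> v; case: (ltnP N v) => hv.
    have z : forall l : {ffun 'I_n -> 'I_n.+1}, count_mem v (sq l) = 0.
      move=> l; apply/count_memPn/negP => /(allP (sq_bound l)) /=; lia.
    by rewrite !z.
  case: v hv => [|v] hv.
    have := Gsum (fun _ => 1) (sq_bound l1); have := Gsum (fun _ => 1) (sq_bound l2).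
    rewrite !sum1_size !sq_size !big_ord_recl /=.
    under eq_bigr do rewrite mul1n -f_val.
    move=> A; under eq_bigr do rewrite mul1n -f_val.
    rewrite e; lia.
  by have := f_val l1 (Ordinal hv); rewrite e f_val.
have ps : perm_eq (sq l1) (sq l2) by apply/allP => v _; apply/eqP; apply: cnt.
have E := sorted_eq (leT := geq) (fun a b c h1 h2 => leq_trans h2 h1)
   (fun a b h => anti_leq ltac:(by rewrite andbC; exact h)) (sq_sorted h1) (sq_sorted h2) ps.
by apply/ffunP => i; apply/val_inj; have := congr1 (nth 0 ^~ i) E; rewrite /= !sq_nth.
Qed.

Definition t0B (m : {ffun 'I_N -> 'I_N.+1}) :=
  flatten [seq nseq (m j : nat) j.+1 | j <- enum 'I_N] ++ nseq (n - \sum_(j < N) (m j : nat)) 0.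
Definition tB m := sort geq (t0B m).

Lemma t_perm m : perm_eq (tB m) (t0B m).
Proof. exact: permEl (perm_sort geq _). Qed.

Lemma sumn_map_enum (h : 'I_N -> nat) : sumn [seq h j | j <- enum 'I_N] = \sum_j h j.
Proof. by rewrite sumnE big_map big_enum. Qed.

Lemma MU_le m : m \in MU N n -> (\sum_j (m j : nat) <= n)%N.
Proof. by rewrite inE => /eqP <-; apply: leq_sum => j _; rewrite mulSn leq_addr. Qed.

Lemma t_size m : m \in MU N n -> size (tB m) = n.
Proof.
move=> hm; rewrite (perm_size (t_perm m)) size_cat size_nseq size_flatten /shape -map_comp.
rewrite sumn_map_enum.
under eq_bigr do rewrite /= size_nseq.
by rewrite subnKC // MU_le.
Qed.

Lemma t_count m (j : 'I_N) : count_mem j.+1 (tB m) = m j.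
Proof.
rewrite (permP (t_perm m)) count_cat count_nseq /= mul0n addn0 count_flatten -map_comp.
rewrite sumn_map_enum.
under eq_bigr do rewrite /= count_nseq /=.
rewrite (bigD1 j) //= eqxx mul1n big1 ?addn0 // => j' hj'.
by rewrite eqSS -val_eqE /= in hj' *; rewrite (negbTE hj') mul0n.
Qed.

Lemma t_bound m : m \in MU N n -> all (fun v => v <= n)%N (tB m).
Proof.
move=> hm; apply/allP => x; rewrite (perm_mem (t_perm m)) mem_cat => /orP [|].
  move=> /flattenP [s /mapP [j _ ->]]; rewrite mem_nseq => /andP [hmj /eqP ->].
  move: hm; rewrite inE => /eqP <-.
  rewrite (bigD1 j) //=; apply: leq_trans (leq_addr _ _); rewrite leq_pmulr //.
by rewrite mem_nseq => /andP [_ /eqP ->].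
Qed.

Definition gB m : {ffun 'I_n -> 'I_n.+1} := [ffun i : 'I_n => inord (nth 0 (tB m) i)].

Lemma g_val m (i : 'I_n) : m \in MU N n -> (gB m i : nat) = nth 0 (tB m) i.
Proof.
move=> hm; rewrite ffunE inordK // ltnS.
apply: (allP (t_bound hm)); apply: mem_nth; rewrite t_size //.
Qed.

Lemma t_sorted m : sorted geq (tB m).
Proof. apply: sort_sorted => a b /=; rewrite orbC; exact: leq_total. Qed.

Lemma t_sum m : sumn (tB m) = \sum_(j < N) j.+1 * m j.
Proof.
rewrite (perm_sumn (t_perm m)) sumn_cat sumn_nseq mul0n addn0 sumn_flatten -map_comp.
rewrite sumn_map_enum; apply: eq_bigr => j _ /=; by rewrite sumn_nseq mulnC.
Qed.

Lemma g_in m : m \in MU N n -> gB m \in PS n.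
Proof.
move=> hm; rewrite inE; apply/andP; split.
  apply/forallP => i; apply/forallP => j; apply/implyP => hij; rewrite !g_val //.
  apply: (sorted_leq_nth (leT := geq) (fun a b c h1 h2 => leq_trans h2 h1) (fun a => leqnn a) 0 (t_sorted m)) => //;
   by rewrite inE t_size.
have -> : \sum_(i < n) (gB m i : nat) = sumn (tB m).
  under eq_bigr do rewrite g_val //.
  by rewrite sumnE (big_nth 0) t_size // big_mkord.
by rewrite t_sum; move: hm; rewrite inE.
Qed.

Lemma sq_g m : m \in MU N n -> sq (gB m) = tB m.
Proof.
move=> hm; rewrite /sq (eq_map (g := fun i : 'I_n => nth 0 (tB m) i)); last by move=> i; rewrite g_val.
rewrite (map_comp (nth 0 (tB m)) val) val_enum_ord.
by have := mkseq_nth 0 (tB m); rewrite t_size.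
Qed.

Lemma fg m : m \in MU N n -> fB (gB m) = m.
Proof. by move=> hm; apply/ffunP => j; apply/val_inj; rewrite /= f_val sq_g // t_count. Qed.

Lemma npart_MU : npart n = #|MU N n|.
Proof.
rewrite npartE -(card_in_imset f_inj); congr #|pred_of_set _|.
apply/setP => m; apply/imsetP/idP => [[l hl ->]|hm]; first exact: f_in.
by exists (gB m); [exact: g_in | rewrite fg].
Qed.
End Bij.

Import Order.TTheory GRing.Theory Num.Theory.
Local Open Scope ring_scope.


Section Gen.
Variable R : comNzRingType.
Variables (d : int -> R) (p : nat -> R) (k : nat).
Hypothesis dneg : forall q : int, q < 0 -> d q = 0.
Hypothesis conv : forall n, (n <= k)%N ->
  \sum_(q < n.+1) d q%:Z * p (n - q)%N = (n == 0%N)%:R.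

Lemma conv_shift (i j : nat) : (i <= k)%N ->
  \sum_(l < i.+1) p (i - l)%N * d (l%:Z - j%:Z) = if (j <= i)%N then (i == j)%:R else 0.
Proof.
move=> ik.
rewrite -(big_mkord xpredT (fun l => p (i - l)%N * d (l%:Z - j%:Z))) /=.
case: (leqP j i) => ji; last first.
  rewrite big1_seq // => l; rewrite mem_iota => /andP [_ hl].
  rewrite dneg ?mulr0 //. rewrite subr_lt0 ltz_nat. lia.
rewrite (big_cat_nat (n := j)) //=; last by lia.
rewrite big1_seq ?add0r; last first.
  move=> l; rewrite mem_iota => /andP [_ hl]. rewrite dneg ?mulr0 //. rewrite subr_lt0 ltz_nat. lia.
rewrite -{1}(add0n j) big_addn.
have -> : (i.+1 - j = (i - j).+1)%N by lia.
have -> : (i == j) = (i - j == 0)%N by apply/eqP/eqP; lia.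
rewrite -(conv (n := (i - j)%N)); last by lia.
rewrite big_mkord.
apply: eq_bigr => q _. rewrite mulrC; congr (_ * _).
  congr d. rewrite PoszD. ring.
congr p. lia.
Qed.
End Gen.


Section Gen2.
Variable R : comNzRingType.
Variables (d : int -> R) (p : nat -> R) (k : nat) (x : R).
Hypothesis dneg : forall q : int, q < 0 -> d q = 0.
Hypothesis d0 : d 0 = 1.
Hypothesis conv : forall n, (n <= k)%N ->
  \sum_(q < n.+1) d q%:Z * p (n - q)%N = (n == 0%N)%:R.

Lemma p0 : p 0 = 1.
Proof. have := conv (n := 0) (leq0n _). by rewrite big_ord1 d0 mul1r. Qed.

Lemma conv_succ (i : nat) : (i < k)%N ->
  \sum_(l < i.+1) p (i - l)%N * d (l%:Z + 1) = - p i.+1.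
Proof.
move=> ik; have := conv (n := i.+1) ik.
rewrite big_ord_recl /= subn0 d0 mul1r => h.
idtac.
apply: (addrI (p i.+1)); rewrite subrr; apply: (etrans _ h); congr (_ + _).
apply: eq_bigr => l _; rewrite mulrC /bump /= add1n subSS; congr (_ * _).
by congr d; lia.
Qed.

Lemma sum_delta (F : nat -> R) m :
  \sum_(l < k) F l * (l == m :> nat)%:R = if (m < k)%N then F m else 0.
Proof.
case: ltnP => h.
  rewrite (bigD1 (Ordinal h)) //= eqxx mulr1 big1 ?addr0 // => l hl.
  by rewrite -val_eqE /= in hl; rewrite (negbTE hl) mulr0.
rewrite big1 // => l _.
have -> : (l == m :> nat) = false by apply/negbTE/eqP => e; move: (ltn_ord l); lia.
by rewrite mulr0.
Qed.

Definition Pm : 'M[R]_k := \matrix_(i, j) (if (j <= i)%N then p (i - j)%N else 0).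
Definition Mm : 'M[R]_k := \matrix_(i, j) (d (i%:Z - j%:Z) - x * d (i%:Z - j%:Z + 1)).
Definition Am : 'M[R]_k := \matrix_(i, j)
  ((i == j :> nat)%:R - x * ((i.+1 == j :> nat)%:R - (j == 0 :> nat)%:R * p i.+1)).

Lemma PM : Pm *m Mm = Am.
Proof.
apply/matrixP => i j; rewrite !mxE.
have ik : (i < k)%N := ltn_ord i.
transitivity (\sum_(l < i.+1) p (i - l)%N * (d (l%:Z - j%:Z) - x * d (l%:Z - j%:Z + 1))).
  rewrite (big_ord_widen k (fun l => p (i - l)%N * (d (l%:Z - j%:Z) - x * d (l%:Z - j%:Z + 1)))) //.
  rewrite [RHS]big_mkcond /=; apply: eq_bigr => l _; rewrite /Pm /Mm !mxE ltnS.
  by case: ifP => _; rewrite ?mul0r.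
under eq_bigr do rewrite mulrBr mulrCA.
rewrite sumrB -mulr_sumr (conv_shift dneg conv); last by lia.
case: j => [[|j'] /= hj].
  under eq_bigr do rewrite subr0.
  rewrite (conv_succ ik) /= mul1r.
  case: i ik => [[|i'] hi] ik /=; ring.
have E : forall l : nat, (l%:Z - (j'.+1)%:Z + 1) = l%:Z - j'%:Z by move=> l; lia.
under eq_bigr do rewrite E.
rewrite (conv_shift dneg conv); last by lia.
rewrite mul0r subr0 eqSS.
have [e|ne] := eqVneq (nat_of_ord i) j'.
  rewrite -e ltnn leqnn (_ : (nat_of_ord i == i.+1) = false); first by rewrite sub0r.
  by apply/negbTE; lia.
rewrite if_same mulr0 subr0.
rewrite subr0; case: ifP => // hh; have -> : (nat_of_ord i == j'.+1) = false by apply/negbTE; lia.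
by [].
Qed.

Definition Sx := \sum_(n < k.+1) p n * x ^+ n.
Definition Lm : 'M[R]_k := \matrix_(i, j) (if (i == 0 :> nat) then x ^+ j else (i == j :> nat)%:R).
Definition Bm : 'M[R]_k := \matrix_(i, j)
  (if (i == 0 :> nat) then (j == 0 :> nat)%:R * Sx else Am i j).

Lemma LA : Lm *m Am = Bm.
Proof.
apply/matrixP => i j; rewrite !mxE.
have [i0|inz] := eqVneq (nat_of_ord i) 0%N.
  under eq_bigr do rewrite /Lm /Am !mxE i0 /= mulrBr mulrCA.
  rewrite sumrB (sum_delta (fun l => x ^+ l)) ltn_ord -mulr_sumr.
  case: j => [[|j'] hj] /=.
    under eq_bigr do rewrite add0r mulrN.
    rewrite sumrN mulrN opprK mul1r expr0 mulr_sumr /Sx big_ord_recl p0 expr0 mulr1; congr (_ + _).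
    by apply: eq_bigr => l _; rewrite exprS; ring.
  under eq_bigr do rewrite mul0r subr0 eqSS.
  rewrite (sum_delta (fun l => x ^+ l)) (_ : (j' < k)%N); last by lia.
  by rewrite mul0r exprSr mulrC subrr.
rewrite (bigD1 i) //= big1 ?addr0.
  by rewrite /Lm /Bm !mxE (negbTE inz) eqxx mul1r.
move=> l hl; rewrite /Lm !mxE (negbTE inz).
by rewrite -val_eqE /= eq_sym in hl; rewrite (negbTE hl) mul0r.
Qed.

Lemma detP : \det Pm = 1.
Proof.
rewrite det_trig; last first.
  by apply/is_trig_mxP => a b hab; rewrite mxE leqNgt hab.
by rewrite big1 // => a _; rewrite mxE leqnn subnn p0.
Qed.

Lemma detL : \det Lm = 1.
Proof.
rewrite -det_tr det_trig; last first.
  apply/is_trig_mxP => a b hab; rewrite !mxE.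
  rewrite (_ : (nat_of_ord b == 0%N) = false); last by apply/negbTE; lia.
  by rewrite (_ : (nat_of_ord b == a) = false) //; apply/negbTE; lia.
by rewrite big1 // => a _; rewrite !mxE eqxx; case: eqP => // ->.
Qed.

Lemma detB (hk : (0 < k)%N) : \det Bm = Sx.
Proof.
pose i0 := Ordinal hk.
have LV : forall b : 'I_k.-1, (lift i0 b : nat) = b.+1 by [].
have BV : forall a, bump 0 a = a.+1 by [].
rewrite (expand_det_row _ i0) (bigD1 i0) //= big1 ?addr0; last first.
  move=> j hj; rewrite /Bm mxE /=.
  rewrite -val_eqE /= in hj; by rewrite (negbTE hj) mul0r mul0r.
rewrite /Bm mxE /= mul1r /cofactor addn0 expr0 mul1r -det_tr det_trig; last first.
  apply/is_trig_mxP => a b hab; rewrite !mxE LV /= !BV.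
  rewrite (_ : (b.+1 == a.+1) = false); last by apply/negbTE; lia.
  rewrite (_ : (b.+2 == a.+1) = false); last by apply/negbTE; lia.
  by rewrite mul0r subr0 mulr0 subr0.
rewrite big1 ?mulr1 // => a _; rewrite !mxE LV /= ?BV eqxx. 
by rewrite (_ : (a.+2 == a.+1) = false) ?mul0r ?subr0 ?mulr0 ?subr0 //; apply/negbTE; lia.
Qed.

Lemma det_Mm (hk : (0 < k)%N) : \det Mm = Sx.
Proof.
rewrite -(detB hk) -LA det_mulmx detL mul1r -PM det_mulmx detP mul1r //.
Qed.
End Gen2.


Lemma pent2 (m : int) : 2 * pent m = m * (3 * m - 1).
Proof.
rewrite /pent.
have [a [b [-> hb]]] : exists a b : int, m = 2 * a + b /\ (b = 0 \/ b = 1).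
  exists (m %/ 2)%Z, (m %% 2)%Z; split; first by rewrite mulrC -divz_eq.
  lia.
case: hb => ->.
  rewrite (_ : (2 * a + 0) * (3 * (2 * a + 0) - 1) = (a * (6 * a - 1)) * 2); last by lia.
  rewrite mulzK //. lia.
rewrite (_ : (2 * a + 1) * (3 * (2 * a + 1) - 1) = ((2 * a + 1) * (3 * a + 1)) * 2); last by lia.
rewrite mulzK //. lia.
Qed.

Lemma pent_inj (m m' : int) : pent m = pent m' -> m = m'.
Proof.
move=> e; have := pent2 m; have := pent2 m'; rewrite e => h1 h2.
have : (m - m') * (3 * m + 3 * m' - 1) = 0 by nia.
move/eqP; rewrite mulf_eq0 => /orP [] /eqP; lia.
Qed.

Lemma pent_ge (m : int) : (`|m|%:Z <= pent m).
Proof.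
have := pent2 m => h.
case: (ltrP m 0) => hm; nia.
Qed.

Lemma dpent_sum (K i : nat) : (i <= K)%N ->
  \sum_(j < (2 * K).+1) (-1) ^+ `|j%:Z - K%:Z|%N * (pent (j%:Z - K%:Z) == i%:Z)%:R
    = dpent i%:Z.
Proof.
move=> iK; rewrite /dpent /=.
case: pickP => [j0 /eqP hj0 | hnone].
  have hm0 := pent_ge (j0%:Z - i%:Z); rewrite hj0 in hm0.
  have hj1 : (absz (j0%:Z - i%:Z + K%:Z)%R < (2 * K).+1)%N by lia.
  rewrite (bigD1 (Ordinal hj1)) //= big1 ?addr0.
    have -> : (absz (j0%:Z - i%:Z + K%:Z)%R)%:Z - K%:Z = j0%:Z - i%:Z by lia.
    by rewrite hj0 eqxx mulr1.
  move=> j hj; have -> : (pent (j%:Z - K%:Z) == i%:Z) = false; last by rewrite mulr0.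
  apply/negbTE/eqP => h; rewrite -hj0 in h; move/pent_inj: h => h.
  move/eqP: hj; apply; apply/val_inj => /=; lia.
rewrite big1 // => j _; have -> : (pent (j%:Z - K%:Z) == i%:Z) = false; last by rewrite mulr0.
apply/negbTE/eqP => h; have := pent_ge (j%:Z - K%:Z); rewrite h => hb.
have hj0 : (absz (j%:Z - K%:Z + i%:Z)%R < (2 * i).+1)%N by lia.
have := hnone (Ordinal hj0); rewrite /=.
have -> : (absz (j%:Z - K%:Z + i%:Z)%R)%:Z - i%:Z = j%:Z - K%:Z by lia.
by rewrite h eqxx.
Qed.


Fixpoint tri k := if k is k'.+1 then (tri k' + k'.+1)%N else 0%N.
Lemma tri2 k : (2 * tri k = k * k.+1)%N.
Proof. elim: k => [//|k IH] /=; nia. Qed.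

Definition pr (a b : nat) : {poly int} := \prod_(a <= i < b) (1 - 'X^i).
Definition sg k : {poly int} := (-1) ^+ k.
Definition c (n k : nat) : {poly int} := sg k * 'X^(n * k + tri k) * pr k.+1 n.+1.
Definition T n := \sum_(k < n.+1) c n k.
Definition fp (m : int) : {poly int} := sg `|m|%N * 'X^(absz (pent m)).
Definition Rr n := \sum_(j < (2 * n).+1) fp (j%:Z - n%:Z).

Lemma pent_neg n : pent (- n%:Z) = (n * n + tri n)%N%:Z.
Proof. have := pent2 (- n%:Z); have := tri2 n; nia. Qed.

Lemma pent_pos n : pent (n.+1%:Z) = (n.+1 * n.+1 + tri n)%N%:Z.
Proof. have := pent2 (n.+1%:Z); have := tri2 n; nia. Qed.

Lemma prS a b : (a <= b)%N -> pr a b.+1 = pr a b * (1 - 'X^b).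
Proof. by move=> h; rewrite /pr big_nat_recr. Qed.
Lemma prL a b : (a < b)%N -> pr a b = (1 - 'X^a) * pr a.+1 b.
Proof. by move=> h; rewrite /pr big_ltn. Qed.
Lemma pr_nil a : pr a a = 1.
Proof. by rewrite /pr big_geq. Qed.

Section Step.
Variable n : nat.
Definition gS k : {poly int} := - sg k * 'X^(n.+1 * k.+1 + tri k) * pr k.+1 n.+1.
Definition GS k := if k is k'.+1 then gS k' else 0.

Lemma diff k : (k <= n)%N -> c n.+1 k - c n k = GS k.+1 - GS k.
Proof.
move=> kn; rewrite /c /GS (prS (b := n.+1)) //.
case: k kn => [|k] kn.
  rewrite /gS /sg !expr0 !muln0 !muln1 /= !addn0 !expr0. ring.
rewrite /gS (prL (a := k.+1)) //.
set e := (n * k.+1 + tri k)%N.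
have e1 : (n.+1 * k.+1 + tri k.+1 = e + k.+1 + k.+1)%N by rewrite /e /=; lia.
have e2 : (n * k.+1 + tri k.+1 = e + k.+1)%N by rewrite /e /=; lia.
have e3 : (n.+1 * k.+2 + tri k.+1 = e + k.+1 + k.+1 + n.+1)%N by rewrite /e /=; lia.
have e4 : (n.+1 * k.+1 + tri k = e + k.+1)%N by rewrite /e /=; lia.
rewrite e1 e2 e3 e4 !exprD /sg exprS. ring.
Qed.

Lemma T_step : T n.+1 = T n + fp (n.+1%:Z) + fp (- n.+1%:Z).
Proof.
rewrite /T big_ord_recr /=.
have -> : \sum_(i < n.+1) c n.+1 i = \sum_(i < n.+1) c n i + \sum_(i < n.+1) (GS i.+1 - GS i).
  rewrite -big_split /=; apply: eq_bigr => i _; rewrite -diff; [ring | exact: ltn_ord i].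
rewrite -(big_mkord xpredT (fun i => GS i.+1 - GS i)) telescope_sumr //= subr0.
rewrite /fp (pent_pos n) (pent_neg n.+1) abszN /= /gS /c !pr_nil /sg exprS !mulr1.
ring.
Qed.
End Step.

Lemma R_step n : Rr n.+1 = Rr n + fp (n.+1%:Z) + fp (- n.+1%:Z).
Proof.
rewrite /Rr (_ : (2 * n.+1).+1 = (2 * n).+3)%N; last by lia.
rewrite big_ord_recl big_ord_recr /=.
have -> : \sum_(i < (2 * n).+1) fp ((lift ord0 (widen_ord (leqnSn _) i))%:Z - n.+1%:Z)
        = \sum_(i < (2 * n).+1) fp (i%:Z - n%:Z).
  by apply: eq_bigr => i _; congr fp; rewrite /= /bump /=; lia.
rewrite (_ : (0%:Z - n.+1%:Z) = - n.+1%:Z); last by lia.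
rewrite (_ : ((lift ord0 ord_max : 'I_(2 * n).+3) : nat)%:Z - n.+1%:Z = n.+1%:Z); last by rewrite /= /bump /=; lia.
ring.
Qed.

Lemma T_R n : T n = Rr n.
Proof.
elim: n => [|n IH].
  rewrite /T /Rr !big_ord1 /c /fp /sg pr_nil /=.
  by rewrite (_ : (0 * 0 + 0)%N = 0%N) // (_ : (1 * (0 %/ (1 + 1)))%N = 0%N) // !expr0 !mulr1.
by rewrite T_step R_step IH.
Qed.

Lemma sgC e : sg e = ((-1) ^+ e)%:P.
Proof. by rewrite /sg rmorphXn rmorphN1. Qed.

Lemma coef_fp (m : int) i : (fp m)`_i = (-1) ^+ `|m|%N * (pent m == i%:Z)%:R.
Proof.
rewrite /fp sgC coefCM coefXn; congr (_ * _%:R).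
have := pent_ge m => h; apply/eqP/eqP; lia.
Qed.

Lemma coef_D N i : (i <= N)%N ->
  (\prod_(j < N) (1 - 'X^(j.+1)) : {poly int})`_i = dpent i%:Z.
Proof.
move=> iN.
have -> : \prod_(j < N) (1 - 'X^(j.+1)) = pr 1 N.+1 :> {poly int}
  by rewrite /pr big_add1 /= big_mkord.
have -> : pr 1 N.+1 = T N - \sum_(k < N) c N k.+1.
  rewrite /T big_ord_recl /= /c /sg !muln0 addn0 expr0 !mul1r.
  by rewrite addrK.
rewrite coefB [X in _ - X]coef_sum big1 ?subr0; last first.
  move=> k _; rewrite /c [sg _ * _]mulrC -mulrA coefXnM ifT //=.
  have : (N <= N * k.+1)%N by rewrite leq_pmulr.
  rewrite /=; lia.
rewrite T_R /Rr coef_sum.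
under eq_bigr do rewrite coef_fp.
exact: dpent_sum.
Qed.


Definition GP N : {poly int} := \prod_(j < N) \sum_(m < N.+1) 'X^(j.+1 * m).

Lemma coef_GP N n : (GP N)`_n = #|MU N n|%:Z.
Proof.
rewrite /GP bigA_distr_bigA /= coef_sum.
under eq_bigr do rewrite prodrXr coefXn.
rewrite -natz -sum1_card natr_sum [RHS]big_mkcond /=; apply: eq_bigr => f _.
by rewrite inE eq_sym; case: eqP.
Qed.

Lemma geo (y : {poly int}) K : (\sum_(m < K) y ^+ m) * (1 - y) = 1 - y ^+ K.
Proof.
elim: K => [|K IH]; first by rewrite big_ord0 mul0r expr0 subrr.
by rewrite big_ord_recr /= mulrDl IH exprS; ring.
Qed.

Lemma GP_mul N : GP N * \prod_(j < N) (1 - 'X^(j.+1)) = \prod_(j < N) (1 - 'X^(j.+1 * N.+1)).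
Proof.
rewrite /GP -big_split /=; apply: eq_bigr => j _.
under eq_bigr do rewrite exprM.
by rewrite geo -exprM.
Qed.

Lemma coef_trunc N n : (n <= N)%N ->
  (\prod_(j < N) (1 - 'X^(j.+1 * N.+1)) : {poly int})`_n = (n == 0%N)%:R.
Proof.
move=> nN.
have [q ->] : exists q, \prod_(j < N) (1 - 'X^(j.+1 * N.+1)) = 1 + 'X^(N.+1) * q :> {poly int}.
  apply: (big_ind (fun P => exists q, P = 1 + 'X^(N.+1) * q)).
  - by exists 0; rewrite mulr0 addr0.
  - move=> P1 P2 [q1 ->] [q2 ->]; exists (q1 + q2 + 'X^(N.+1) * q1 * q2); ring.
  - move=> j _; exists (- 'X^(j * N.+1)); rewrite mulSn exprD; ring.
by rewrite coefD coef1 coefXnM ifT ?addr0 // ltnS.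
Qed.

Lemma conv_int N n : (n <= N)%N ->
  \sum_(q < n.+1) dpent q%:Z * (npart (n - q))%:Z = (n == 0%N)%:R.
Proof.
move=> nN; rewrite -(coef_trunc nN) -GP_mul mulrC coefM.
apply: eq_bigr => q _.
rewrite coef_D; last by move: (ltn_ord q); lia.
rewrite coef_GP (npart_MU (N := N)) //; lia.
Qed.

Unset Implicit Arguments.


Lemma dpent0 : dpent 0 = 1.
Proof.
rewrite /dpent /=; case: pickP => [j _|/(_ ord0)] /=.
  by rewrite (ord1 j).
by [].
Qed.

Theorem mainTheorem9 (k : nat) (x : Cplx) : (1 <= k)%N ->
  \sum_(n < k.+1) (npart n)%:R * x ^+ n =
  \det (\matrix_(i < k, j < k)
          ((dpent (i%:Z - j%:Z))%:~R - x * (dpent (i%:Z - j%:Z + 1))%:~R)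
        : 'M[Cplx]_k).
Proof.
move=> hk.
pose d := fun z : int => (dpent z)%:~R : Cplx.
pose p := fun n : nat => (npart n)%:R : Cplx.
have dneg : forall q : int, q < 0 -> d q = 0 by move=> q hq; rewrite /d /dpent hq.
have d0 : d 0 = 1 by rewrite /d dpent0.
have conv : forall n, (n <= k)%N -> \sum_(q < n.+1) d q%:Z * p (n - q)%N = (n == 0%N)%:R.
  move=> n hn; have := conv_int hn; move/(congr1 (fun z : int => z%:~R : Cplx)).
  rewrite (big_morph (fun z : int => (z%:~R : Cplx)) (@intrD _) (mulr0z 1)) /=.
  move=> h; rewrite (_ : (n == 0%N)%:R = ((n == 0%N)%:R : int)%:~R); last by case: (n == 0%N).
  rewrite -h; apply: eq_bigr => q _; by rewrite /d /p intrM.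
symmetry; exact: (det_Mm x dneg d0 conv hk).
Qed.
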